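(* Let $k>l\ge0$ be integers, $\xi\in\mathbb{C}$, $f:\mathbb{N}\to[0,\infty)$, and $A=\xi(a^\dagger)^ka^l+\xi^*(a^\dagger)^la^k+f(a^\dagger a)$ with domain $\mathcal{D}_0$. Assume there exist $\kappa\ge2$ and $N\in\mathbb{N}$ such that $f(n)\ge\kappa|\xi|\beta^{kl}_n$ for all $n\ge N$. Then $A$ is essentially self-adjoint. In particular, if $\kappa>2$, then $A$ is bounded from below by $-2|\xi|\beta^{kl}_{N-1}\kappa/(\kappa-2)$, i.e. $\langle\psi,A\psi\rangle\ge-\frac{2|\xi|\beta^{kl}_{N-1}\kappa}{\kappa-2}\|\psi\|^2$ for all $\psi\in\mathcal{D}_0$.
   Context: $\mathbb{N}=\{0,1,2,\dots\}$. $\mathcal{H}$ is a separable complex Hilbert space with orthonormal basis $(\phi_n)_{n\in\mathbb{N}}$; $\mathcal{D}_0$ is the set of finite linear combinations of the $\phi_n$. The operators $a,a^\dagger$ have domain $\mathcal{D}_0$ and act by $a\phi_n=\sqrt{n}\,\phi_{n-1}$ ($a\phi_0=0$), $a^\dagger\phi_n=\sqrt{n+1}\,\phi_{n+1}$, extended linearly. $f(a^\dagger a)$ has domain $\mathcal{D}_0$ and $f(a^\dagger a)\phi_n=f(n)\phi_n$. For integers $x$ and $s\ge0$, $(x,s)=x(x+1)\cdots(x+s-1)$ ($=1$ if $s=0$), with the convention $(x,s)=0$ whenever $x$ is a negative integer; for integers $n$ and $k,l\ge0$, $\beta^{kl}_n=\sqrt{(n-l+1,l)(n-l+1,k)}$.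 *)

(* Defs.v *)
(* H is realized concretely as l^2(N) (coefficient
   sequences w.r.t. the orthonormal basis phi_n). *)
From Stdlib Require Import Reals ZArith Lra.
From Coquelicot Require Import Coquelicot.
Open Scope R_scope.

Definition vec := nat -> C.

Definition l2 (u : vec) : Prop := ex_series (fun n => (Cmod (u n))^2).

Definition nrm2 (u : vec) : R := Series (fun n => (Cmod (u n))^2).

Definition inner (u v : vec) : C :=
  (Series (fun n => Re (Cmult (Cconj (u n)) (v n))),
   Series (fun n => Im (Cmult (Cconj (u n)) (v n)))).

(* D_0 : finite linear combinations of the phi_n *)
Definition D0 (u : vec) : Prop := exists M : nat, forall n, (M <= n)%nat -> u n = 0%C.

(* a phi_n = sqrt n phi_{n-1}, a^dag phi_n = sqrt(n+1) phi_{n+1}, in coefficients *)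
Definition a_op (u : vec) : vec := fun n => Cmult (RtoC (sqrt (INR (S n)))) (u (S n)).
Definition adag_op (u : vec) : vec := fun n =>
  match n with O => 0%C | S m => Cmult (RtoC (sqrt (INR n))) (u m) end.

Definition A_op (k l : nat) (xi : C) (f : nat -> R) (u : vec) : vec := fun n =>
  Cplus (Cplus (Cmult xi (Nat.iter k adag_op (Nat.iter l a_op u) n))
               (Cmult (Cconj xi) (Nat.iter l adag_op (Nat.iter k a_op u) n)))
        (Cmult (RtoC (f n)) (u n)).

(* operators are represented by their graphs (relations on vectors) *)
Definition graph := vec -> vec -> Prop.

Definition graph_of_A (k l : nat) (xi : C) (f : nat -> R) : graph :=
  fun u w => D0 u /\ w = A_op k l xi f u.

Definition converges (x : nat -> vec) (v : vec) : Prop :=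
  is_lim_seq (fun j => nrm2 (fun n => Cminus (x j n) (v n))) 0.

Definition closure (G : graph) : graph := fun v w =>
  l2 v /\ l2 w /\ exists x y : nat -> vec,
    (forall j, G (x j) (y j)) /\ converges x v /\ converges y w.

Definition adjoint (G : graph) : graph := fun v w =>
  l2 v /\ l2 w /\ forall x y, G x y -> inner v y = inner w x.

Definition self_adjoint (G : graph) : Prop := forall v w, G v w <-> adjoint G v w.

Definition essentially_self_adjoint (G : graph) : Prop := self_adjoint (closure G).

(* Pochhammer symbol (x,s) with the convention (x,s)=0 for negative integer x *)
Definition poch (x : Z) (s : nat) : R :=
  if Z.ltb x 0 then 0
  else List.fold_right Rmult 1 (List.map (fun i => IZR (x + Z.of_nat i)) (List.seq 0 s)).

Definition beta (k l : nat) (n : Z) : R :=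
  sqrt (poch (n - Z.of_nat l + 1) l * poch (n - Z.of_nat l + 1) k).

(* Main.v *)
Require Import Defs.
From Stdlib Require Import Reals ZArith Lra Lia FunctionalExtensionality Classical IndefiniteDescription.
From Coquelicot Require Import Coquelicot.
Open Scope R_scope.

Fixpoint fsum (a : nat -> R) (K : nat) : R :=
  match K with O => 0 | S K' => fsum a K' + a K' end.
Fixpoint csum (a : nat -> C) (K : nat) : C :=
  match K with O => RtoC 0 | S K' => Cplus (csum a K') (a K') end.

Lemma csum_fst a K : fst (csum a K) = fsum (fun n => fst (a n)) K.
Proof. induction K; simpl; [reflexivity| rewrite IHK; reflexivity]. Qed.
Lemma csum_snd a K : snd (csum a K) = fsum (fun n => snd (a n)) K.
Proof. induction K; simpl; [reflexivity| rewrite IHK; reflexivity]. Qed.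

Lemma fsum_ext a b K : (forall n, (n < K)%nat -> a n = b n) -> fsum a K = fsum b K.
Proof. induction K; intros H; simpl; [reflexivity|]. rewrite IHK by (intros; apply H; lia). rewrite H by lia; reflexivity. Qed.
Lemma csum_ext a b K : (forall n, (n < K)%nat -> a n = b n) -> csum a K = csum b K.
Proof. induction K; intros H; simpl; [reflexivity|]. rewrite IHK by (intros; apply H; lia). rewrite H by lia; reflexivity. Qed.

Lemma fsum_plus a b K : fsum (fun n => a n + b n) K = fsum a K + fsum b K.
Proof. induction K; simpl; [lra| rewrite IHK; lra]. Qed.
Lemma fsum_scal c a K : fsum (fun n => c * a n) K = c * fsum a K.
Proof. induction K; simpl; [lra| rewrite IHK; lra]. Qed.
Lemma fsum_le a b K : (forall n, (n < K)%nat -> a n <= b n) -> fsum a K <= fsum b K.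
Proof. induction K; intros H; simpl; [lra|]. assert (a K <= b K) by (apply H; lia).
 assert (fsum a K <= fsum b K) by (apply IHK; intros; apply H; lia). lra. Qed.
Lemma fsum_nonneg a K : (forall n, 0 <= a n) -> 0 <= fsum a K.
Proof. intros H; induction K; simpl; [lra| specialize (H K); lra]. Qed.

Lemma fsum_tail a K1 K2 : (K1 <= K2)%nat -> (forall n, (K1 <= n)%nat -> a n = 0) -> fsum a K2 = fsum a K1.
Proof. intros H1 H2. induction H1; [reflexivity|]. simpl. rewrite IHle, H2 by lia. lra. Qed.
Lemma csum_tail a K1 K2 : (K1 <= K2)%nat -> (forall n, (K1 <= n)%nat -> a n = RtoC 0) -> csum a K2 = csum a K1.
Proof. intros H1 H2. induction H1; [reflexivity|]. simpl. rewrite IHle, H2 by lia.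
 destruct (csum a K1); unfold Cplus, RtoC; simpl; f_equal; ring. Qed.

Lemma fsum_shift (g : nat -> R) d K :
  fsum (fun m => if (d <=? m)%nat then g (m - d)%nat else 0) (K + d) = fsum g K.
Proof.
 induction K; simpl.
 - rewrite fsum_ext with (b := fun _ => 0). { clear. induction d; simpl; lra. }
   intros n Hn. destruct (Nat.leb_spec d n); [lia|reflexivity].
 - rewrite IHK. destruct (Nat.leb_spec d (K + d)); [|lia]. replace (K + d - d)%nat with K by lia. reflexivity.
Qed.

Lemma sum_n_fsum a n : sum_n a n = fsum a (S n).
Proof. induction n; simpl. - rewrite sum_O; lra. - rewrite sum_Sn, IHn. reflexivity. Qed.

Lemma is_series_fin a K : (forall n, (K <= n)%nat -> a n = 0) -> is_series a (fsum a K).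
Proof.
 intros H. eapply filterlim_ext_loc; [| apply filterlim_const].
 exists K. intros n Hn. rewrite sum_n_fsum. symmetry. apply fsum_tail; [lia|exact H].
Qed.
Lemma Series_fin a K : (forall n, (K <= n)%nat -> a n = 0) -> Series a = fsum a K.
Proof. intros H; apply is_series_unique, is_series_fin, H. Qed.
Lemma ex_series_fin a K : (forall n, (K <= n)%nat -> a n = 0) -> ex_series a.
Proof. intros H; eexists; apply is_series_fin, H. Qed.

Lemma Series_nonneg a : (forall n, 0 <= a n) -> ex_series a -> 0 <= Series a.
Proof. intros H E. apply Rle_trans with (Series (fun _ => 0)).
 - rewrite (Series_fin _ 0) by (intros; reflexivity); simpl; lra.
 - apply Series_le; [intros n; split; [lra| apply H]| exact E]. Qed.

Lemma fsum_le_Series a K : (forall n, 0 <= a n) -> ex_series a -> fsum a K <= Series a.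
Proof.
 intros H E. destruct K as [|K]; simpl. { apply Series_nonneg; auto. }
 rewrite (Series_incr_n a (S K)) by first [lia | exact E]. simpl.
 rewrite <- sum_n_Reals, sum_n_fsum. simpl.
 assert (0 <= Series (fun k => a (S K + k)%nat)).
 { apply Series_nonneg; auto. apply (proj1 (ex_series_incr_n a (S K))); exact E. } simpl in *; lra.
Qed.

Lemma term_le_Series a n : (forall n, 0 <= a n) -> ex_series a -> a n <= Series a.
Proof. intros H E. eapply Rle_trans; [| apply (fsum_le_Series a (S n)); auto].
 simpl. assert (0 <= fsum a n) by (apply fsum_nonneg; auto). lra. Qed.

Lemma bounded_series a B : (forall n, 0 <= a n) -> (forall K, fsum a K <= B) -> ex_series a /\ Series a <= B.
Proof.
 intros H HB.
 assert (EF: ex_finite_lim_seq (sum_n a)).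
 { apply ex_finite_lim_seq_incr with B.
   - intros n; rewrite sum_Sn; unfold plus; simpl; specialize (H (S n)); lra.
   - intros n; rewrite sum_n_fsum; apply HB. }
 destruct EF as [l Hl].
 assert (Hs: is_series a l) by exact Hl.
 split; [eexists; exact Hs|]. rewrite (is_series_unique _ _ Hs).
 assert (Rbar_le l B). { apply is_lim_seq_le with (sum_n a) (fun _ => B); auto.
   intros n; rewrite sum_n_fsum; apply HB. apply is_lim_seq_const. }
 exact H0.
Qed.

Definition lowt (d : nat) (bb : nat -> R) (u : vec) (n : nat) : C :=
  if (d <=? n)%nat then Cmult (RtoC (bb (n - d)%nat)) (u (n - d)%nat) else RtoC 0.
Definition upt (d : nat) (bb : nat -> R) (u : vec) (n : nat) : C :=
  Cmult (RtoC (bb n)) (u (n + d)%nat).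
Definition Bop (d : nat) (bb : nat -> R) (xi : C) (g : nat -> R) (u : vec) : vec := fun n =>
  Cplus (Cplus (Cmult xi (lowt d bb u n)) (Cmult (Cconj xi) (upt d bb u n))) (Cmult (RtoC (g n)) (u n)).

Fixpoint pn (x s : nat) : R := match s with O => 1 | S s' => INR x * pn (S x) s' end.
Fixpoint pd (n k : nat) : R := match k with O => 1 | S k' => INR n * pd (n - 1) k' end.

Lemma pn_nonneg x s : 0 <= pn x s.
Proof. revert x; induction s; intros x; simpl; [lra|]. apply Rmult_le_pos; [apply pos_INR|apply IHs]. Qed.

Lemma pn_S_r x s : pn x (S s) = pn x s * INR (x + s).
Proof. revert x; induction s; intros x.
 - simpl. rewrite Nat.add_0_r; ring.
 - change (pn x (S (S s))) with (INR x * pn (S x) (S s)). rewrite IHs.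
   change (pn x (S s)) with (INR x * pn (S x) s).
   replace (S x + s)%nat with (x + S s)%nat by lia. ring. Qed.

Lemma pd_nonneg n k : 0 <= pd n k.
Proof. revert n; induction k; intros n; simpl; [lra|]. apply Rmult_le_pos; [apply pos_INR|apply IHk]. Qed.

Lemma pn_mono a b s : (a <= b)%nat -> pn a s <= pn b s.
Proof. revert a b; induction s; intros a b H; simpl; [lra|].
 apply Rmult_le_compat; [apply pos_INR|apply pn_nonneg|apply le_INR; exact H|apply IHs; lia]. Qed.

Lemma pd_pn n k : (k <= n)%nat -> pd n k = pn (n - k + 1) k.
Proof. revert n; induction k; intros n H; [reflexivity|].
 change (pd n (S k)) with (INR n * pd (n-1) k).
 rewrite IHk by lia. rewrite pn_S_r.
 replace (n - 1 - k + 1)%nat with (n - S k + 1)%nat by lia.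
 replace (n - S k + 1 + k)%nat with n by lia. ring. Qed.

Lemma iter_a l u m : Nat.iter l a_op u m = Cmult (RtoC (sqrt (pn (S m) l))) (u (m + l)%nat).
Proof.
 revert m; induction l; intros m.
 - simpl. rewrite sqrt_1, Nat.add_0_r. destruct (u m); unfold Cmult, RtoC; simpl; f_equal; ring.
 - change (Nat.iter (S l) a_op u m) with (a_op (Nat.iter l a_op u) m).
   change (pn (S m) (S l)) with (INR (S m) * pn (S (S m)) l).
   unfold a_op. rewrite IHl. replace (S m + l)%nat with (m + S l)%nat by lia.
   rewrite sqrt_mult by (first [apply pos_INR | apply pn_nonneg]).
   destruct (u (m + S l)%nat); unfold Cmult, RtoC; simpl; f_equal; ring.
Qed.

Lemma iter_adag k g n : Nat.iter k adag_op g n =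
  if (k <=? n)%nat then Cmult (RtoC (sqrt (pd n k))) (g (n - k)%nat) else RtoC 0.
Proof.
 revert n; induction k; intros n.
 - simpl. rewrite sqrt_1, Nat.sub_0_r. destruct (g n); unfold Cmult, RtoC; simpl; f_equal; ring.
 - destruct n as [|m]; [reflexivity|].
   change (Nat.iter (S k) adag_op g (S m)) with (adag_op (Nat.iter k adag_op g) (S m)).
   unfold adag_op at 1. rewrite IHk. simpl (S k <=? S m)%nat.
   destruct (k <=? m)%nat.
   + change (pd (S m) (S k)) with (INR (S m) * pd (S m - 1) k).
     replace (S m - 1)%nat with m by lia. simpl (S m - S k)%nat.
     rewrite sqrt_mult by (first [apply pos_INR | apply pd_nonneg]).
     destruct (g (m - k)%nat); unfold Cmult, RtoC; simpl; f_equal; ring.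
   + unfold Cmult, RtoC; simpl; f_equal; ring.
Qed.

Lemma fold_pn x s j : List.fold_right Rmult 1
   (List.map (fun i => IZR (Z.of_nat x + Z.of_nat i)) (List.seq j s)) = pn (x + j) s.
Proof. revert j; induction s; intros j; [reflexivity|].
 simpl List.seq. simpl List.map. simpl List.fold_right. rewrite IHs.
 rewrite <- Nat2Z.inj_add, <- INR_IZR_INZ.
 replace (x + S j)%nat with (S (x + j)) by lia. reflexivity. Qed.

Lemma poch_pn x s : poch (Z.of_nat x) s = pn x s.
Proof. unfold poch. destruct (Z.ltb_spec (Z.of_nat x) 0); [lia|].
 rewrite fold_pn, Nat.add_0_r. reflexivity. Qed.

Lemma poch_nonneg x s : 0 <= poch x s.
Proof. destruct (Z.ltb_spec x 0).
 - unfold poch. destruct (Z.ltb_spec x 0); [lra|lia].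
 - replace x with (Z.of_nat (Z.to_nat x)) by lia. rewrite poch_pn; apply pn_nonneg. Qed.

Lemma poch_mono x y s : (x <= y)%Z -> poch x s <= poch y s.
Proof. intros H. destruct (Z.ltb_spec x 0).
 - unfold poch at 1. destruct (Z.ltb_spec x 0); [|lia]. apply poch_nonneg.
 - replace x with (Z.of_nat (Z.to_nat x)) by lia. replace y with (Z.of_nat (Z.to_nat y)) by lia.
   rewrite !poch_pn. apply pn_mono. lia. Qed.

Lemma beta_nonneg k l x : 0 <= beta k l x.
Proof. apply sqrt_pos. Qed.

Lemma beta_mono k l x y : (x <= y)%Z -> beta k l x <= beta k l y.
Proof. intros H. unfold beta. apply sqrt_le_1_alt.
 apply Rmult_le_compat; try apply poch_nonneg; apply poch_mono; lia. Qed.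

Lemma beta_nat k l m : (l <= m)%nat ->
  beta k l (Z.of_nat m) = sqrt (pn (m - l + 1) l * pn (m - l + 1) k).
Proof. intros H. unfold beta.
 replace (Z.of_nat m - Z.of_nat l + 1)%Z with (Z.of_nat (m - l + 1)) by lia.
 rewrite !poch_pn. reflexivity. Qed.

Lemma beta_zero k l m : (1 <= k)%nat -> (m < l)%nat -> beta k l (Z.of_nat m) = 0.
Proof. intros Hk H. unfold beta.
 destruct (Z.eq_dec (Z.of_nat m - Z.of_nat l + 1) 0) as [E|E].
 - rewrite E. change 0%Z with (Z.of_nat 0). rewrite !poch_pn.
   destruct k as [|k]; [lia|]. simpl. rewrite Rmult_0_l, Rmult_0_r. apply sqrt_0.
 - unfold poch at 1. destruct (Z.ltb_spec (Z.of_nat m - Z.of_nat l + 1) 0); [|lia].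
   rewrite Rmult_0_l. apply sqrt_0. Qed.

Lemma low_eq k l u n : (l < k)%nat ->
  Nat.iter k adag_op (Nat.iter l a_op u) n = lowt (k - l) (fun m => beta k l (Z.of_nat m)) u n.
Proof.
 intros Hlk. rewrite iter_adag. unfold lowt.
 destruct (Nat.leb_spec k n).
 - destruct (Nat.leb_spec (k - l) n); [|lia].
   rewrite iter_a. rewrite beta_nat by lia.
   replace (n - k + l)%nat with (n - (k - l))%nat by lia.
   replace (n - (k - l) - l + 1)%nat with (S (n - k)) by lia.
   rewrite pd_pn by lia. replace (n - k + 1)%nat with (S (n - k)) by lia.
   rewrite (sqrt_mult (pn _ l)) by apply pn_nonneg.
   destruct (u (n - (k - l))%nat); unfold Cmult, RtoC; simpl; f_equal; ring.
 - destruct (Nat.leb_spec (k - l) n); [|reflexivity].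
   rewrite beta_zero by lia. destruct (u (n - (k - l))%nat); unfold Cmult, RtoC; simpl; f_equal; ring.
Qed.

Lemma up_eq k l u n : (l < k)%nat ->
  Nat.iter l adag_op (Nat.iter k a_op u) n = upt (k - l) (fun m => beta k l (Z.of_nat m)) u n.
Proof.
 intros Hlk. rewrite iter_adag. unfold upt.
 destruct (Nat.leb_spec l n).
 - rewrite iter_a. rewrite beta_nat by lia.
   replace (n - l + k)%nat with (n + (k - l))%nat by lia.
   rewrite pd_pn by lia. replace (n - l + 1)%nat with (S (n - l)) by lia.
   rewrite (sqrt_mult (pn _ l)) by apply pn_nonneg.
   destruct (u (n + (k - l))%nat); unfold Cmult, RtoC; simpl; f_equal; ring.
 - rewrite beta_zero by lia. destruct (u (n + (k - l))%nat); unfold Cmult, RtoC; simpl; f_equal; ring.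
Qed.

Lemma A_op_eq k l xi f : (l < k)%nat ->
  forall u, A_op k l xi f u = Bop (k - l) (fun n => beta k l (Z.of_nat n)) xi f u.
Proof.
 intros Hlk u. apply functional_extensionality. intros n.
 unfold A_op, Bop. rewrite low_eq, up_eq by exact Hlk. reflexivity.
Qed.

Ltac Csolve := intros; repeat match goal with z : C |- _ => destruct z end;
  unfold Cminus, Cplus, Cmult, Cconj, Copp, RtoC, Re, Im in *; simpl in *; f_equal; ring.

Lemma csum_plus a b K : csum (fun n => Cplus (a n) (b n)) K = Cplus (csum a K) (csum b K).
Proof. induction K; simpl. - Csolve. - rewrite IHK. generalize (csum a K) (csum b K) (a K) (b K). Csolve. Qed.

Lemma csum_shift (g : nat -> C) d K : (d <= K)%nat ->
  csum (fun m => if (d <=? m)%nat then g (m - d)%nat else RtoC 0) K = csum g (K - d).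
Proof.
 intros HK. replace K with ((K - d) + d)%nat at 1 by lia. generalize (K - d)%nat as K'. clear HK. intros K'.
 induction K'; simpl.
 - rewrite csum_ext with (b := fun _ => RtoC 0). { clear. induction d; simpl; [reflexivity|]. rewrite IHd. Csolve. }
   intros n Hn. destruct (Nat.leb_spec d n); [lia|reflexivity].
 - rewrite IHK'. destruct (Nat.leb_spec d (K' + d)); [|lia]. replace (K' + d - d)%nat with K' by lia. reflexivity.
Qed.

Definition supp (x : vec) (M : nat) := forall n, (M <= n)%nat -> x n = RtoC 0.

Lemma D0_supp x : D0 x <-> exists M, supp x M.
Proof. reflexivity. Qed.

Lemma supp_mono x M M' : (M <= M')%nat -> supp x M -> supp x M'.
Proof. intros H S n Hn. apply S. lia. Qed.

Lemma Bop_supp d bb xi g x M : supp x M -> supp (Bop d bb xi g x) (M + d).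
Proof.
 intros S n Hn. unfold Bop, lowt, upt. rewrite (S n), (S (n + d)%nat) by lia.
 destruct (Nat.leb_spec d n).
 - rewrite (S (n - d)%nat) by lia. Csolve.
 - Csolve.
Qed.

Lemma hermitian d bb xi g u x M K : supp x M -> (M + d <= K)%nat ->
  csum (fun m => Cmult (Cconj (u m)) (Bop d bb xi g x m)) K =
  csum (fun m => Cmult (Cconj (Bop d bb xi g u m)) (x m)) K.
Proof.
 intros S HK.
 set (F := fun m => Cmult (Cconj (u m)) (Cmult (RtoC (g m)) (x m))).
 set (G := fun p => Cmult (Cconj (u (p + d)%nat)) (Cmult xi (Cmult (RtoC (bb p)) (x p)))).
 set (H := fun p => Cmult (Cconj (u p)) (Cmult (Cconj xi) (Cmult (RtoC (bb p)) (x (p + d)%nat)))).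
 transitivity (csum (fun m => Cplus (Cplus (if (d <=? m)%nat then G (m - d)%nat else RtoC 0) (H m)) (F m)) K).
 { apply csum_ext; intros m _. unfold Bop, lowt, upt, F, G, H.
   destruct (Nat.leb_spec d m).
   - replace (m - d + d)%nat with m by lia. generalize (u m) (x m) (x (m - d)%nat) (x (m + d)%nat) xi. Csolve.
   - generalize (u m) (x m) (x (m - d)%nat) (x (m + d)%nat) xi. Csolve. }
 transitivity (csum (fun m => Cplus (Cplus (G m) (if (d <=? m)%nat then H (m - d)%nat else RtoC 0)) (F m)) K).
 2:{ apply csum_ext; intros m _. unfold Bop, lowt, upt, F, G, H.
   destruct (Nat.leb_spec d m).
   - replace (m - d + d)%nat with m by lia. generalize (u m) (x m) (u (m - d)%nat) (u (m + d)%nat) xi. Csolve.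
   - generalize (u m) (x m) (u (m - d)%nat) (u (m + d)%nat) xi. Csolve. }
 rewrite !csum_plus. rewrite !csum_shift by lia.
 rewrite (csum_tail G (K - d) K) by (try lia; intros p Hp; unfold G; rewrite (S p) by lia; Csolve).
 rewrite (csum_tail H (K - d) K) by (try lia; intros p Hp; unfold H; rewrite (S (p + d)%nat) by lia; Csolve).
 generalize (csum G (K - d)) (csum H (K - d)) (csum F K). Csolve.
Qed.

Lemma fsum_shift' (g : nat -> R) d K : (d <= K)%nat ->
  fsum (fun m => if (d <=? m)%nat then g (m - d)%nat else 0) K = fsum g (K - d).
Proof. intros H. replace K with (K - d + d)%nat at 1 by lia. apply fsum_shift. Qed.

Definition lw (d : nat) (bb : nat -> R) (n : nat) : R := if (d <=? n)%nat then bb (n - d)%nat else 0.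

Lemma Cmod_sq z : Cmod z ^ 2 = fst z ^ 2 + snd z ^ 2.
Proof. unfold Cmod. rewrite pow2_sqrt; [reflexivity|]. nra. Qed.

Lemma Cmod_nonneg z : 0 <= Cmod z.
Proof. unfold Cmod; apply sqrt_pos. Qed.

Lemma re_bound (a b z : C) : -2 * fst (Cmult (Cconj a) (Cmult z b)) <= Cmod z * (Cmod a ^ 2 + Cmod b ^ 2).
Proof.
 pose proof (re_le_Cmod (Cmult (Cconj a) (Cmult z b))) as H. unfold Re in H.
 rewrite !Cmod_mult, Cmod_conj in H.
 pose proof (Cmod_nonneg a). pose proof (Cmod_nonneg b). pose proof (Cmod_nonneg z).
 apply Rabs_le_between in H. destruct H as [H _].
 assert (2 * (Cmod a * Cmod b) <= Cmod a ^ 2 + Cmod b ^ 2) by (pose proof (pow2_ge_0 (Cmod a - Cmod b)); nra).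
 nra.
Qed.

Lemma fsum_zero K : fsum (fun _ => 0) K = 0.
Proof. induction K; simpl; [reflexivity| rewrite IHK; ring]. Qed.

Lemma qform d bb xi g x M K : supp x M -> (M + d <= K)%nat -> (forall n, 0 <= bb n) ->
  snd (csum (fun m => Cmult (Cconj (x m)) (Bop d bb xi g x m)) K) = 0 /\
  fsum (fun n => (g n - Cmod xi * (bb n + lw d bb n)) * Cmod (x n) ^ 2) K <=
  fst (csum (fun m => Cmult (Cconj (x m)) (Bop d bb xi g x m)) K).
Proof.
 intros S HK Hbb.
 set (F := fun m => Cmult (Cconj (x m)) (Cmult (RtoC (g m)) (x m))).
 set (G := fun p => Cmult (Cconj (x (p + d)%nat)) (Cmult xi (Cmult (RtoC (bb p)) (x p)))).
 assert (E: csum (fun m => Cmult (Cconj (x m)) (Bop d bb xi g x m)) K =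
            csum (fun m => Cplus (Cplus (G m) (Cconj (G m))) (F m)) K).
 { transitivity (csum (fun m => Cplus (Cplus (if (d <=? m)%nat then G (m - d)%nat else RtoC 0) (Cconj (G m))) (F m)) K).
   { apply csum_ext; intros m _. unfold Bop, lowt, upt, F, G.
     destruct (Nat.leb_spec d m).
     - replace (m - d + d)%nat with m by lia. generalize (x m) (x (m - d)%nat) (x (m + d)%nat) xi. Csolve.
     - generalize (x m) (x (m - d)%nat) (x (m + d)%nat) xi. Csolve. }
   rewrite !csum_plus, csum_shift by lia.
   rewrite (csum_tail G (K - d) K) by (try lia; intros p Hp; unfold G; rewrite (S p) by lia; Csolve).
   reflexivity. }
 rewrite E. rewrite csum_snd, csum_fst. split.
 - rewrite (fsum_ext _ (fun _ => 0)); [apply fsum_zero|]. intros n _. unfold F, G.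
   generalize (x n) (x (n + d)%nat) xi. intros [a1 a2] [b1 b2] [c1 c2]. simpl. ring.
 - set (q := fun n => - Cmod xi * bb n * Cmod (x n) ^ 2 - Cmod xi * bb n * Cmod (x (n + d)%nat) ^ 2 + g n * Cmod (x n) ^ 2).
   apply Rle_trans with (fsum q K).
   + assert (Hs: fsum (fun n => Cmod xi * bb n * Cmod (x (n + d)%nat) ^ 2) K =
                   fsum (fun n => Cmod xi * lw d bb n * Cmod (x n) ^ 2) K).
     { rewrite (fsum_ext (fun n => Cmod xi * lw d bb n * Cmod (x n) ^ 2)
          (fun n => if (d <=? n)%nat then (fun p => Cmod xi * bb p * Cmod (x (p + d)%nat) ^ 2) (n - d)%nat else 0)).
       2:{ intros n _. unfold lw. destruct (Nat.leb_spec d n); [|ring]. replace (n - d + d)%nat with n by lia. reflexivity. }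
       rewrite (fsum_shift' (fun p => Cmod xi * bb p * Cmod (x (p + d)%nat) ^ 2) d K) by lia.
       apply fsum_tail; [lia|]. intros p Hp. rewrite (S (p + d)%nat) by lia.
       replace (Cmod (RtoC 0)) with 0. ring. unfold Cmod, RtoC; simpl. replace (0 * (0 * 1) + 0 * (0 * 1)) with 0 by ring. rewrite sqrt_0. reflexivity. }
     assert (E1: fsum (fun n => (g n - Cmod xi * (bb n + lw d bb n)) * Cmod (x n) ^ 2) K =
       fsum (fun n => - Cmod xi * bb n * Cmod (x n) ^ 2 + g n * Cmod (x n) ^ 2) K + (-1) * fsum (fun n => Cmod xi * lw d bb n * Cmod (x n) ^ 2) K).
     { rewrite <- fsum_scal, <- fsum_plus. apply fsum_ext; intros; ring. }
     assert (E2: fsum q K = fsum (fun n => - Cmod xi * bb n * Cmod (x n) ^ 2 + g n * Cmod (x n) ^ 2) K + (-1) * fsum (fun n => Cmod xi * bb n * Cmod (x (n + d)%nat) ^ 2) K).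
     { rewrite <- fsum_scal, <- fsum_plus. apply fsum_ext; intros; unfold q; ring. }
     rewrite E1, E2, Hs. lra.
   + apply fsum_le. intros n _. unfold q, F, G.
     pose proof (re_bound (x (n + d)%nat) (x n) xi).
     assert (fst (Cmult (Cconj (x (n + d)%nat)) (Cmult xi (Cmult (RtoC (bb n)) (x n)))) =
             bb n * fst (Cmult (Cconj (x (n + d)%nat)) (Cmult xi (x n)))).
     { generalize (x n) (x (n + d)%nat) xi. intros [a1 a2] [b1 b2] [c1 c2]. simpl. ring. }
     assert (fst (Cmult (Cconj (x n)) (Cmult (RtoC (g n)) (x n))) = g n * Cmod (x n) ^ 2).
     { rewrite Cmod_sq. generalize (x n). intros [a1 a2]. simpl. ring. }
     pose proof (Hbb n). pose proof (Cmod_nonneg xi).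
     assert (Hf: forall a b : C, fst (Cplus (Cplus a (Cconj a)) b) = 2 * fst a + fst b) by (intros [? ?] [? ?]; simpl; ring).
     rewrite Hf. unfold G, F. rewrite H0, H1. nra.
Qed.

Lemma Bop_lin d bb xi g (a b : C) x y n :
  Bop d bb xi g (fun m => Cplus (Cmult a (x m)) (Cmult b (y m))) n =
  Cplus (Cmult a (Bop d bb xi g x n)) (Cmult b (Bop d bb xi g y n)).
Proof. unfold Bop, lowt, upt. destruct (Nat.leb_spec d n);
  generalize (x n) (y n) (x (n - d)%nat) (y (n - d)%nat) (x (n + d)%nat) (y (n + d)%nat) xi; Csolve. Qed.

Lemma Bop_minus d bb xi g x y n :
  Bop d bb xi g (fun m => Cminus (x m) (y m)) n = Cminus (Bop d bb xi g x n) (Bop d bb xi g y n).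
Proof. unfold Bop, lowt, upt. destruct (Nat.leb_spec d n);
  generalize (x n) (y n) (x (n - d)%nat) (y (n - d)%nat) (x (n + d)%nat) (y (n + d)%nat) xi; Csolve. Qed.

Lemma Bop_g d bb xi g c u n :
  Bop d bb xi (fun m => g m + c) u n = Cplus (Bop d bb xi g u n) (Cmult (RtoC c) (u n)).
Proof. unfold Bop, lowt, upt. destruct (Nat.leb_spec d n);
  generalize (u n) (u (n - d)%nat) (u (n + d)%nat) xi; Csolve. Qed.

Lemma supp_lin a b x y M : supp x M -> supp y M -> supp (fun m => Cplus (Cmult a (x m)) (Cmult b (y m))) M.
Proof. intros Sx Sy n Hn. rewrite Sx, Sy by exact Hn. Csolve. Qed.

Lemma supp_minus x y M : supp x M -> supp y M -> supp (fun m => Cminus (x m) (y m)) M.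
Proof. intros Sx Sy n Hn. rewrite Sx, Sy by exact Hn. Csolve. Qed.

Definition delta (n0 : nat) : vec := fun n => if Nat.eqb n n0 then RtoC 1 else RtoC 0.

Lemma supp_delta n0 : supp (delta n0) (S n0).
Proof. intros n Hn. unfold delta. destruct (Nat.eqb_spec n n0); [lia|reflexivity]. Qed.

Lemma csum_delta (z : nat -> C) n0 K : (n0 < K)%nat ->
  csum (fun m => Cmult (z m) (delta n0 m)) K = z n0.
Proof.
 intros H. rewrite (csum_tail _ (S n0) K).
 2: lia.
 2:{ intros n Hn; unfold delta; destruct (Nat.eqb_spec n n0); [lia|]; Csolve. }
 simpl. rewrite (csum_ext _ (fun _ => RtoC 0)).
 - unfold delta. rewrite Nat.eqb_refl. assert (csum (fun _ => RtoC 0) n0 = RtoC 0).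
   { clear. induction n0; simpl; [reflexivity|]. rewrite IHn0. Csolve. }
   rewrite H0. generalize (z n0). Csolve.
 - intros n Hn. unfold delta. destruct (Nat.eqb_spec n n0); [lia|]. Csolve.
Qed.

Lemma ex_series_Rplus a b : ex_series a -> ex_series b -> ex_series (fun n => a n + b n).
Proof. intros A B. apply (ex_series_plus a b A B). Qed.
Lemma ex_series_Rscal c a : ex_series a -> ex_series (fun n => c * a n).
Proof. intros A. apply (ex_series_scal_l c a A). Qed.

Lemma ex_series_nonneg_le a b : (forall n, 0 <= a n <= b n) -> ex_series b -> ex_series a.
Proof. intros H B. apply (ex_series_le a b); auto. intros n. unfold norm; simpl. unfold abs; simpl.
 rewrite Rabs_pos_eq; apply H. Qed.

Lemma Cmod2_nonneg z : 0 <= Cmod z ^ 2.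
Proof. apply pow2_ge_0. Qed.

Lemma Cmod2_plus a b : Cmod (Cplus a b) ^ 2 <= 2 * Cmod a ^ 2 + 2 * Cmod b ^ 2.
Proof. rewrite !Cmod_sq. destruct a as [a1 a2], b as [b1 b2]; simpl.
 pose proof (pow2_ge_0 (a1 - b1)); pose proof (pow2_ge_0 (a2 - b2)). nra. Qed.
Lemma Cmod2_minus a b : Cmod (Cminus a b) ^ 2 <= 2 * Cmod a ^ 2 + 2 * Cmod b ^ 2.
Proof. rewrite !Cmod_sq. destruct a as [a1 a2], b as [b1 b2]; simpl.
 pose proof (pow2_ge_0 (a1 + b1)); pose proof (pow2_ge_0 (a2 + b2)). nra. Qed.
Lemma Cmod2_scal c a : Cmod (Cmult c a) ^ 2 = Cmod c ^ 2 * Cmod a ^ 2.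
Proof. rewrite Cmod_mult. ring. Qed.

Lemma l2_ext x y : (forall n, x n = y n) -> l2 x -> l2 y.
Proof. intros H L. unfold l2 in *. eapply ex_series_ext; [|exact L]. intros n; simpl; rewrite H; reflexivity. Qed.

Lemma nrm2_ext x y : (forall n, x n = y n) -> nrm2 x = nrm2 y.
Proof. intros H. unfold nrm2. apply Series_ext. intros n; rewrite H; reflexivity. Qed.

Lemma l2_plus x y : l2 x -> l2 y -> l2 (fun n => Cplus (x n) (y n)).
Proof. intros X Y. unfold l2. apply ex_series_nonneg_le with (fun n => 2 * Cmod (x n) ^ 2 + 2 * Cmod (y n) ^ 2).
 - intros n; split; [apply Cmod2_nonneg|apply Cmod2_plus].
 - apply ex_series_Rplus; apply ex_series_Rscal; assumption. Qed.
Lemma l2_minus x y : l2 x -> l2 y -> l2 (fun n => Cminus (x n) (y n)).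
Proof. intros X Y. unfold l2. apply ex_series_nonneg_le with (fun n => 2 * Cmod (x n) ^ 2 + 2 * Cmod (y n) ^ 2).
 - intros n; split; [apply Cmod2_nonneg|apply Cmod2_minus].
 - apply ex_series_Rplus; apply ex_series_Rscal; assumption. Qed.
Lemma l2_scal c x : l2 x -> l2 (fun n => Cmult c (x n)).
Proof. intros X. unfold l2. eapply ex_series_ext; [|apply (ex_series_Rscal (Cmod c ^ 2) _ X)].
 intros n. rewrite Cmod2_scal. reflexivity. Qed.

Lemma l2_supp x M : supp x M -> l2 x.
Proof. intros S. unfold l2. apply ex_series_fin with M. intros n Hn. rewrite S by exact Hn.
 unfold Cmod, RtoC; simpl. replace (0 * (0 * 1) + 0 * (0 * 1)) with 0 by ring. rewrite sqrt_0. ring. Qed.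

Lemma nrm2_supp x M : supp x M -> nrm2 x = fsum (fun n => Cmod (x n) ^ 2) M.
Proof. intros S. unfold nrm2. apply Series_fin. intros n Hn. rewrite S by exact Hn.
 unfold Cmod, RtoC; simpl. replace (0 * (0 * 1) + 0 * (0 * 1)) with 0 by ring. rewrite sqrt_0. ring. Qed.

Lemma nrm2_nonneg x : l2 x -> 0 <= nrm2 x.
Proof. intros X. apply Series_nonneg; [intros; apply Cmod2_nonneg|exact X]. Qed.

Lemma nrm2_term x n : l2 x -> Cmod (x n) ^ 2 <= nrm2 x.
Proof. intros X. apply (term_le_Series (fun n => Cmod (x n) ^ 2)); [intros; apply Cmod2_nonneg|exact X]. Qed.

Lemma nrm2_fst x n : l2 x -> (fst (x n)) ^ 2 <= nrm2 x.
Proof. intros X. eapply Rle_trans; [|apply (nrm2_term x n X)]. rewrite Cmod_sq. pose proof (pow2_ge_0 (snd (x n))). lra. Qed.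
Lemma nrm2_snd x n : l2 x -> (snd (x n)) ^ 2 <= nrm2 x.
Proof. intros X. eapply Rle_trans; [|apply (nrm2_term x n X)]. rewrite Cmod_sq. pose proof (pow2_ge_0 (fst (x n))). lra. Qed.

Lemma nrm2_plus_le x y : l2 x -> l2 y -> nrm2 (fun n => Cplus (x n) (y n)) <= 2 * nrm2 x + 2 * nrm2 y.
Proof. intros X Y. unfold nrm2. rewrite <- !Series_scal_l, <- Series_plus by (apply ex_series_Rscal; assumption).
 apply Series_le. - intros n; split; [apply Cmod2_nonneg|apply Cmod2_plus].
 - apply ex_series_Rplus; apply ex_series_Rscal; assumption. Qed.
Lemma nrm2_minus_le x y : l2 x -> l2 y -> nrm2 (fun n => Cminus (x n) (y n)) <= 2 * nrm2 x + 2 * nrm2 y.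
Proof. intros X Y. unfold nrm2. rewrite <- !Series_scal_l, <- Series_plus by (apply ex_series_Rscal; assumption).
 apply Series_le. - intros n; split; [apply Cmod2_nonneg|apply Cmod2_minus].
 - apply ex_series_Rplus; apply ex_series_Rscal; assumption. Qed.

Lemma nrm2_scal c x : l2 x -> nrm2 (fun n => Cmult c (x n)) = Cmod c ^ 2 * nrm2 x.
Proof. intros X. unfold nrm2. rewrite <- Series_scal_l. apply Series_ext; intros n. apply Cmod2_scal. Qed.

Lemma parallelogram a b : l2 a -> l2 b ->
  nrm2 (fun n => Cminus (a n) (b n)) + nrm2 (fun n => Cplus (a n) (b n)) = 2 * nrm2 a + 2 * nrm2 b.
Proof. intros A B. unfold nrm2.
 rewrite <- Series_plus by (first [apply l2_minus | apply l2_plus]; assumption).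
 rewrite <- !Series_scal_l, <- Series_plus by (apply ex_series_Rscal; assumption).
 apply Series_ext; intros n. rewrite !Cmod_sq. destruct (a n), (b n); simpl. ring. Qed.

Lemma nrm2_perturb a y K : l2 a -> supp y K ->
  nrm2 (fun n => Cminus (a n) (y n)) = nrm2 a + fsum (fun n => Cmod (Cminus (a n) (y n)) ^ 2 - Cmod (a n) ^ 2) K.
Proof. intros A S.
 assert (E: ex_series (fun n => Cmod (Cminus (a n) (y n)) ^ 2 - Cmod (a n) ^ 2)).
 { apply ex_series_fin with K. intros n Hn. rewrite S by exact Hn. rewrite !Cmod_sq. destruct (a n); simpl. ring. }
 unfold nrm2. rewrite <- (Series_fin _ K).
 2:{ intros n Hn. rewrite S by exact Hn. rewrite !Cmod_sq. destruct (a n); simpl. ring. }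
 rewrite <- Series_plus by assumption. apply Series_ext; intros n; ring. Qed.

Lemma lim_opp (u : nat -> R) (l : R) : is_lim_seq u l -> is_lim_seq (fun n => - u n) (- l).
Proof. intros H. apply (proj1 (is_lim_seq_opp u l)) in H. exact H. Qed.
Lemma lim_scal_l (u : nat -> R) (a l : R) : is_lim_seq u l -> is_lim_seq (fun n => a * u n) (a * l).
Proof. intros H. apply (is_lim_seq_scal_l u a l) in H. exact H. Qed.
Lemma lim_scal_r (u : nat -> R) (a l : R) : is_lim_seq u l -> is_lim_seq (fun n => u n * a) (l * a).
Proof. intros H. rewrite Rmult_comm. eapply is_lim_seq_ext; [|apply (lim_scal_l u a l H)]. intros; simpl; ring. Qed.

Definition clim (z : nat -> C) (w : C) :=
  is_lim_seq (fun j => fst (z j)) (fst w) /\ is_lim_seq (fun j => snd (z j)) (snd w).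

Lemma clim_const w : clim (fun _ => w) w.
Proof. split; apply is_lim_seq_const. Qed.

Lemma clim_plus z1 z2 w1 w2 : clim z1 w1 -> clim z2 w2 -> clim (fun j => Cplus (z1 j) (z2 j)) (Cplus w1 w2).
Proof. intros [A B] [C D]. split; simpl; apply is_lim_seq_plus'; assumption. Qed.

Lemma clim_minus z1 z2 w1 w2 : clim z1 w1 -> clim z2 w2 -> clim (fun j => Cminus (z1 j) (z2 j)) (Cminus w1 w2).
Proof. intros [A B] [C D]. split; simpl; apply is_lim_seq_plus'; try assumption; apply lim_opp; assumption. Qed.

Lemma clim_mult_l c z w : clim z w -> clim (fun j => Cmult c (z j)) (Cmult c w).
Proof. intros [A B]. split; simpl.
 - apply is_lim_seq_minus'; apply lim_scal_l; assumption.
 - apply is_lim_seq_plus'; apply lim_scal_l; assumption. Qed.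

Lemma clim_mult_r c z w : clim z w -> clim (fun j => Cmult (z j) c) (Cmult w c).
Proof. intros [A B]. split; simpl.
 - apply is_lim_seq_minus'; apply lim_scal_r; assumption.
 - apply is_lim_seq_plus'; apply lim_scal_r; assumption. Qed.

Lemma clim_conj z w : clim z w -> clim (fun j => Cconj (z j)) (Cconj w).
Proof. intros [A B]. split; simpl; [assumption|]. apply lim_opp; assumption. Qed.

Lemma clim_ext z1 z2 w : (forall j, z1 j = z2 j) -> clim z1 w -> clim z2 w.
Proof. intros H [A B]. split; eapply is_lim_seq_ext; try eassumption; intros j; simpl; rewrite H; reflexivity. Qed.

Lemma clim_unique z w1 w2 : clim z w1 -> clim z w2 -> w1 = w2.
Proof. intros [A B] [C D]. apply is_lim_seq_unique in A, B, C, D. destruct w1, w2; simpl in *.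
 rewrite A in C; rewrite B in D. injection C; injection D; intros; subst; reflexivity. Qed.

Lemma csum_lim a b K : (forall m, clim (fun j => a j m) (b m)) -> clim (fun j => csum (a j) K) (csum b K).
Proof. intros H. induction K; simpl. - apply clim_const. - apply clim_plus; auto. Qed.

Lemma fsum_lim (a : nat -> nat -> R) (b : nat -> R) K : (forall m, is_lim_seq (fun j => a j m) (b m)) -> is_lim_seq (fun j => fsum (a j) K) (fsum b K).
Proof. intros H. induction K; simpl. - apply is_lim_seq_const. - apply (is_lim_seq_plus' _ _ (fsum b K) (b K)); [exact IHK | apply (H K)]. Qed.

Lemma lim_sq_small (a : nat -> R) (e : nat -> R) : (forall j, a j ^ 2 <= e j) -> is_lim_seq e 0 -> is_lim_seq a 0.
Proof.
 intros H E. apply is_lim_seq_spec in E. apply is_lim_seq_spec. intros eps.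
 assert (Hp: 0 < eps * eps) by (destruct eps; simpl; nra).
 destruct (E (mkposreal _ Hp)) as [J HJ]. exists J. intros j Hj. specialize (HJ j Hj). simpl in HJ.
 specialize (H j). rewrite Rminus_0_r in *. apply Rabs_lt_between in HJ.
 destruct eps as [eps He]; simpl in *. apply Rabs_lt_between. destruct (Rlt_dec (a j) eps); destruct (Rlt_dec (- eps) (a j)); try (split; assumption); nra.
Qed.

Lemma lim_shift0 (a : nat -> R) l : is_lim_seq (fun j => a j - l) 0 -> is_lim_seq a l.
Proof. intros H. apply is_lim_seq_ext with (fun j => (a j - l) + l); [intros; ring|].
 replace (Finite l) with (Rbar_plus 0 l) by (simpl; f_equal; ring). apply is_lim_seq_plus'; [exact H| apply is_lim_seq_const]. Qed.

Lemma l2conv_pointwise (x : nat -> vec) v : (forall j, l2 (fun n => Cminus (x j n) (v n))) ->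
  is_lim_seq (fun j => nrm2 (fun n => Cminus (x j n) (v n))) 0 -> forall n, clim (fun j => x j n) (v n).
Proof.
 intros L H n. split; apply lim_shift0; eapply lim_sq_small; try exact H; intros j.
 - pose proof (nrm2_fst _ n (L j)). simpl in H0. exact H0.
 - pose proof (nrm2_snd _ n (L j)). simpl in H0. exact H0.
Qed.

Lemma Bop_clim d bb xi g (x : nat -> vec) u : (forall n, clim (fun j => x j n) (u n)) ->
  forall n, clim (fun j => Bop d bb xi g (x j) n) (Bop d bb xi g u n).
Proof.
 intros H n. unfold Bop, lowt, upt. apply clim_plus; [apply clim_plus|]; apply clim_mult_l; auto.
 - destruct (d <=? n)%nat; [apply clim_mult_l; auto| apply clim_const].
 - apply clim_mult_l; auto.
Qed.

Lemma amgm_t p q t : 0 <= p -> 0 <= q -> 0 < t -> p * q <= (t * p ^ 2 + q ^ 2 / t) / 2.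
Proof. intros Hp Hq Ht.
 assert (E: (t * p ^ 2 + q ^ 2 / t) / 2 - p * q = (t * p - q) ^ 2 / (2 * t)) by (field; lra).
 assert (0 <= (t * p - q) ^ 2 / (2 * t)) by (apply Rdiv_le_0_compat; [apply pow2_ge_0| lra]). lra. Qed.

Lemma fst_le_Cmod z : Rabs (fst z) <= Cmod z.
Proof. eapply Rle_trans; [apply Rmax_l| apply Rmax_Cmod]. Qed.
Lemma snd_le_Cmod z : Rabs (snd z) <= Cmod z.
Proof. eapply Rle_trans; [apply Rmax_r| apply Rmax_Cmod]. Qed.

Definition ipf (a c : vec) (p : C -> R) (n : nat) : R := p (Cmult (Cconj (a n)) (c n)).

Lemma ip_pt_bound a c n t (p : C -> R) : (forall z, Rabs (p z) <= Cmod z) -> 0 < t ->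
  Rabs (ipf a c p n) <= (t * Cmod (a n) ^ 2 + Cmod (c n) ^ 2 / t) / 2.
Proof. intros Hp Ht. unfold ipf. eapply Rle_trans; [apply Hp|].
 rewrite Cmod_mult, Cmod_conj. apply amgm_t; auto; apply Cmod_nonneg. Qed.

Lemma ip_ex a c (p : C -> R) : (forall z, Rabs (p z) <= Cmod z) -> l2 a -> l2 c ->
  ex_series (fun n => Rabs (ipf a c p n)) /\ ex_series (ipf a c p).
Proof. intros Hp A Cc.
 assert (E: ex_series (fun n => Rabs (ipf a c p n))).
 { apply ex_series_nonneg_le with (fun n => (1 * Cmod (a n) ^ 2 + Cmod (c n) ^ 2 / 1) / 2).
   - intros n; split; [apply Rabs_pos| apply ip_pt_bound; auto; lra].
   - eapply ex_series_ext; [|apply (ex_series_Rplus _ _ (ex_series_Rscal (/2) _ A) (ex_series_Rscal (/2) _ Cc))].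
     intros n; simpl; field. }
 split; [exact E| apply ex_series_Rabs, E]. Qed.

Lemma ip_bound a c (p : C -> R) t : (forall z, Rabs (p z) <= Cmod z) -> l2 a -> l2 c -> 0 < t ->
  Rabs (Series (ipf a c p)) <= (t * nrm2 a + nrm2 c / t) / 2.
Proof. intros Hp A Cc Ht. destruct (ip_ex a c p Hp A Cc) as [E1 E2].
 eapply Rle_trans; [apply Series_Rabs, E1|].
 assert (Hs: Series (fun n => (t * Cmod (a n) ^ 2 + Cmod (c n) ^ 2 / t) / 2) = (t * nrm2 a + nrm2 c / t) / 2).
 { rewrite (Series_ext _ (fun n => (t / 2) * Cmod (a n) ^ 2 + (/ t / 2) * Cmod (c n) ^ 2)) by (intros; field; lra).
   rewrite Series_plus by (apply ex_series_Rscal; assumption). rewrite !Series_scal_l. unfold nrm2. field. lra. }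
 rewrite <- Hs. apply Series_le.
 - intros n; split; [apply Rabs_pos| apply ip_pt_bound; auto].
 - eapply ex_series_ext; [|apply (ex_series_Rplus _ _ (ex_series_Rscal (t/2) _ A) (ex_series_Rscal (/t/2) _ Cc))].
   intros n; simpl; field; lra. Qed.

Lemma lim_by_bound (u : nat -> R) (A : R) (B : nat -> R) : 0 <= A -> is_lim_seq B 0 ->
  (forall j t, 0 < t -> Rabs (u j) <= (t * A + B j / t) / 2) -> is_lim_seq u 0.
Proof.
 intros HA HB H. apply is_lim_seq_spec in HB. apply is_lim_seq_spec. intros [eps He].
 set (t := eps / (A + 1)). assert (Ht: 0 < t) by (unfold t; apply Rdiv_lt_0_compat; lra).
 assert (Hp: 0 < eps * t) by nra.
 destruct (HB (mkposreal _ Hp)) as [J HJ]. exists J. intros j Hj. specialize (HJ j Hj). simpl in HJ.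
 rewrite Rminus_0_r in *. apply Rabs_lt_between in HJ. specialize (H j t Ht).
 assert (B j / t < eps). { apply Rmult_lt_reg_r with t; auto. unfold Rdiv; rewrite Rmult_assoc, Rinv_l by lra. lra. }
 assert (t * A < eps). { unfold t. apply Rmult_lt_reg_r with (A + 1); [lra|]. unfold Rdiv.
   replace (eps * / (A + 1) * A * (A + 1)) with (eps * A * ((A + 1) * / (A + 1))) by ring.
   rewrite Rinv_r by lra. nra. }
 simpl. lra.
Qed.

Lemma ipf_minus a b c p : (forall z w, p (Cminus z w) = p z - p w) ->
  forall n, ipf a (fun m => Cminus (b m) (c m)) p n = ipf a b p n - ipf a c p n.
Proof. intros Hl n. unfold ipf. rewrite <- Hl. f_equal. generalize (a n) (b n) (c n). Csolve. Qed.

Lemma ip_cont a (b : nat -> vec) c (p : C -> R) : (forall z, Rabs (p z) <= Cmod z) ->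
  (forall z w, p (Cminus z w) = p z - p w) ->
  l2 a -> (forall j, l2 (b j)) -> l2 c ->
  is_lim_seq (fun j => nrm2 (fun n => Cminus (b j n) (c n))) 0 ->
  is_lim_seq (fun j => Series (ipf a (b j) p)) (Series (ipf a c p)).
Proof.
 intros Hp Hl A Bj Cc Hlim. apply lim_shift0.
 apply lim_by_bound with (nrm2 a) (fun j => nrm2 (fun n => Cminus (b j n) (c n))); [apply nrm2_nonneg, A| exact Hlim|].
 intros j t Ht.
 rewrite <- Series_minus by (first [apply (ip_ex _ _ p Hp A (Bj j)) | apply (ip_ex _ _ p Hp A Cc)]).
 rewrite <- (Series_ext (ipf a (fun m => Cminus (b j m) (c m)) p)) by (apply ipf_minus, Hl).
 apply ip_bound; auto. apply l2_minus; auto. Qed.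

Lemma inner_cont a (b : nat -> vec) c : l2 a -> (forall j, l2 (b j)) -> l2 c ->
  is_lim_seq (fun j => nrm2 (fun n => Cminus (b j n) (c n))) 0 ->
  clim (fun j => inner a (b j)) (inner a c).
Proof. intros A Bj Cc H. split; simpl.
 - assert (Hl: forall z w : C, fst (Cminus z w) = fst z - fst w) by (intros [? ?] [? ?]; simpl; ring).
   exact (ip_cont a b c fst fst_le_Cmod Hl A Bj Cc H).
 - assert (Hl: forall z w : C, snd (Cminus z w) = snd z - snd w) by (intros [? ?] [? ?]; simpl; ring).
   exact (ip_cont a b c snd snd_le_Cmod Hl A Bj Cc H).
Qed.

Lemma lim_sqdiff (z : nat -> C) (w a : C) : clim z w ->
  is_lim_seq (fun i => Cmod (Cminus a (z i)) ^ 2) (Cmod (Cminus a w) ^ 2).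
Proof. intros [H1 H2].
 apply is_lim_seq_ext with (fun i => (fst a - fst (z i)) * (fst a - fst (z i)) + (snd a - snd (z i)) * (snd a - snd (z i))).
 { intros i. rewrite Cmod_sq. destruct a, (z i); simpl; ring. }
 replace (Cmod (Cminus a w) ^ 2) with ((fst a - fst w) * (fst a - fst w) + (snd a - snd w) * (snd a - snd w))
   by (rewrite Cmod_sq; destruct a, w; simpl; ring).
 assert (A1: is_lim_seq (fun i => fst a - fst (z i)) (fst a - fst w)) by (apply is_lim_seq_minus'; [apply is_lim_seq_const|exact H1]).
 assert (A2: is_lim_seq (fun i => snd a - snd (z i)) (snd a - snd w)) by (apply is_lim_seq_minus'; [apply is_lim_seq_const|exact H2]).
 apply is_lim_seq_plus'; apply is_lim_seq_mult'; assumption. Qed.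

Lemma l2_complete (x : nat -> vec) : (forall j, l2 (x j)) ->
  (forall eps, 0 < eps -> exists J, forall i j, (J <= i)%nat -> (J <= j)%nat -> nrm2 (fun n => Cminus (x i n) (x j n)) < eps) ->
  exists u, l2 u /\ (forall j, l2 (fun n => Cminus (x j n) (u n))) /\
    is_lim_seq (fun j => nrm2 (fun n => Cminus (x j n) (u n))) 0.
Proof.
 intros L Hc.
 assert (Cf: forall n, ex_finite_lim_seq (fun j => fst (x j n))).
 { intros n. apply ex_lim_seq_cauchy_corr. intros [eps He].
   destruct (Hc (eps * eps)) as [J HJ]; [nra|]. exists J. intros i j Hi Hj. simpl.
   specialize (HJ i j Hi Hj). pose proof (nrm2_fst _ n (l2_minus _ _ (L i) (L j))) as Hf. simpl in Hf.
   apply Rabs_lt_between. destruct (Rlt_dec (fst (x i n) - fst (x j n)) eps); destruct (Rlt_dec (- eps) (fst (x i n) - fst (x j n))); try (split; assumption); nra. }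
 assert (Cs: forall n, ex_finite_lim_seq (fun j => snd (x j n))).
 { intros n. apply ex_lim_seq_cauchy_corr. intros [eps He].
   destruct (Hc (eps * eps)) as [J HJ]; [nra|]. exists J. intros i j Hi Hj. simpl.
   specialize (HJ i j Hi Hj). pose proof (nrm2_snd _ n (l2_minus _ _ (L i) (L j))) as Hf. simpl in Hf.
   apply Rabs_lt_between. destruct (Rlt_dec (snd (x i n) - snd (x j n)) eps); destruct (Rlt_dec (- eps) (snd (x i n) - snd (x j n))); try (split; assumption); nra. }
 set (u := fun n => (real (Lim_seq (fun j => fst (x j n))), real (Lim_seq (fun j => snd (x j n))))).
 assert (Hu: forall n, clim (fun j => x j n) (u n)).
 { intros n. destruct (Cf n) as [l1 H1]. destruct (Cs n) as [l2' H2]. unfold u. split; simpl.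
   - rewrite (is_lim_seq_unique _ _ H1). exact H1.
   - rewrite (is_lim_seq_unique _ _ H2). exact H2. }
 assert (Key: forall eps, 0 < eps -> exists J, forall j, (J <= j)%nat ->
          l2 (fun n => Cminus (x j n) (u n)) /\ nrm2 (fun n => Cminus (x j n) (u n)) <= eps).
 { intros eps He. destruct (Hc eps He) as [J HJ]. exists J. intros j Hj.
   apply bounded_series; [intros; apply Cmod2_nonneg|]. intros K.
   assert (Hl: is_lim_seq (fun i => fsum (fun n => Cmod (Cminus (x j n) (x i n)) ^ 2) K)
                 (fsum (fun n => Cmod (Cminus (x j n) (u n)) ^ 2) K)).
   { apply (fsum_lim (fun i n => Cmod (Cminus (x j n) (x i n)) ^ 2)). intros n. apply lim_sqdiff, Hu. }
   assert (Rbar_le (fsum (fun n => Cmod (Cminus (x j n) (u n)) ^ 2) K) eps).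
   { apply is_lim_seq_le_loc with (fun i => fsum (fun n => Cmod (Cminus (x j n) (x i n)) ^ 2) K) (fun _ => eps); auto.
     - exists J. intros i Hi. left. eapply Rle_lt_trans; [|apply (HJ j i Hj Hi)].
       apply (fsum_le_Series (fun n => Cmod (Cminus (x j n) (x i n)) ^ 2)); [intros; apply Cmod2_nonneg| apply l2_minus; auto].
     - apply is_lim_seq_const. }
   exact H. }
 destruct (Key 1 Rlt_0_1) as [J0 HJ0].
 assert (Lu: l2 u).
 { destruct (HJ0 J0 (le_n _)) as [Ld _]. eapply l2_ext; [|apply (l2_minus _ _ (L J0) Ld)].
   intros n; simpl. destruct (x J0 n), (u n); unfold Cminus, Cplus, Copp; simpl; f_equal; ring. }
 exists u. split; [exact Lu|]. split; [intros j; apply l2_minus; auto|].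
 apply is_lim_seq_spec. intros [eps He]. destruct (Key (eps / 2)) as [J HJ]; [lra|].
 exists J. intros j Hj. destruct (HJ j Hj) as [Ld Hle]. pose proof (nrm2_nonneg _ Ld). simpl.
 rewrite Rminus_0_r, Rabs_pos_eq by lra. lra.
Qed.

Lemma fst_conj_le (a b : C) : fst (Cmult (Cconj a) b) <= (Cmod a ^ 2 + Cmod b ^ 2) / 2.
Proof. pose proof (fst_le_Cmod (Cmult (Cconj a) b)). rewrite Cmod_mult, Cmod_conj in H.
 pose proof (amgm_t (Cmod a) (Cmod b) 1 (Cmod_nonneg a) (Cmod_nonneg b) Rlt_0_1).
 apply Rabs_le_between in H. replace ((1 * Cmod a ^ 2 + Cmod b ^ 2 / 1) / 2) with ((Cmod a ^ 2 + Cmod b ^ 2) / 2) in H0 by field. lra. Qed.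

Lemma coerc_D0 d bb xi g x M : (forall n, 0 <= bb n) ->
  (forall n, Cmod xi * (bb n + lw d bb n) + 1 <= g n) -> supp x M ->
  nrm2 x <= nrm2 (Bop d bb xi g x).
Proof.
 intros Hbb Hg S. set (K := (M + d)%nat).
 destruct (qform d bb xi g x M K S (le_n _) Hbb) as [_ Hq].
 assert (SK: supp x K) by (apply supp_mono with M; [unfold K; lia| exact S]).
 assert (SB: supp (Bop d bb xi g x) K) by (apply Bop_supp, S).
 rewrite (nrm2_supp _ _ SK), (nrm2_supp _ _ SB).
 rewrite csum_fst in Hq.
 assert (H1: fsum (fun n => Cmod (x n) ^ 2) K <= fsum (fun n => (g n - Cmod xi * (bb n + lw d bb n)) * Cmod (x n) ^ 2) K).
 { apply fsum_le. intros n _. specialize (Hg n). pose proof (Cmod2_nonneg (x n)). nra. }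
 assert (H2: fsum (fun n => fst (Cmult (Cconj (x n)) (Bop d bb xi g x n))) K <=
             fsum (fun n => (Cmod (x n) ^ 2 + Cmod (Bop d bb xi g x n) ^ 2) / 2) K).
 { apply fsum_le. intros n _. apply fst_conj_le. }
 rewrite (fsum_ext (fun n => (Cmod (x n) ^ 2 + Cmod (Bop d bb xi g x n) ^ 2) / 2)
   (fun n => / 2 * Cmod (x n) ^ 2 + / 2 * Cmod (Bop d bb xi g x n) ^ 2)) in H2 by (intros; field).
 rewrite fsum_plus, !fsum_scal in H2. lra.
Qed.

Lemma Cmod_RtoC_mult (r : R) z : 0 <= r -> Cmod (Cmult (RtoC r) z) = r * Cmod z.
Proof. intros H. rewrite Cmod_mult. unfold Cmod at 1, RtoC; simpl.
 replace (r * (r * 1) + 0 * (0 * 1)) with (r * r) by ring. rewrite sqrt_square by exact H. reflexivity. Qed.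

Lemma kernel_step d bb xi g z n : (forall n, 0 <= bb n) ->
  (forall n, Cmod xi * (bb n + lw d bb n) + 1 <= g n) ->
  Bop d bb xi g z n = RtoC 0 ->
  ((d <= n)%nat -> Cmod (z (n - d)%nat) <= Cmod (z n)) ->
  Cmod (z n) <= Cmod (z (n + d)%nat).
Proof.
 intros Hbb Hg E IH.
 assert (Hgp: 0 <= g n) by (specialize (Hg n); pose proof (Cmod_nonneg xi); pose proof (Hbb n);
   unfold lw in Hg; destruct (d <=? n)%nat; [pose proof (Hbb (n - d)%nat)|]; nra).
 unfold Bop in E.
 assert (E2: Cmult (RtoC (g n)) (z n) = Copp (Cplus (Cmult xi (lowt d bb z n)) (Cmult (Cconj xi) (upt d bb z n)))).
 { revert E. generalize (Cmult (RtoC (g n)) (z n)) (Cplus (Cmult xi (lowt d bb z n)) (Cmult (Cconj xi) (upt d bb z n))).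
   intros [a1 a2] [b1 b2] E. unfold Cplus, Copp, RtoC in *; simpl in *. injection E; intros; f_equal; lra. }
 assert (H1: g n * Cmod (z n) <= Cmod xi * Cmod (lowt d bb z n) + Cmod xi * Cmod (upt d bb z n)).
 { rewrite <- Cmod_RtoC_mult by exact Hgp. rewrite E2. rewrite Cmod_opp.
   eapply Rle_trans; [apply Cmod_triangle|]. rewrite !Cmod_mult, Cmod_conj. lra. }
 assert (H2: Cmod (upt d bb z n) = bb n * Cmod (z (n + d)%nat)) by (unfold upt; apply Cmod_RtoC_mult, Hbb).
 assert (H3: Cmod (lowt d bb z n) <= lw d bb n * Cmod (z n)).
 { unfold lowt, lw. destruct (Nat.leb_spec d n).
   - rewrite Cmod_RtoC_mult by apply Hbb. apply Rmult_le_compat_l; [apply Hbb| apply IH; exact H].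
   - unfold Cmod, RtoC; simpl. replace (0 * (0 * 1) + 0 * (0 * 1)) with 0 by ring. rewrite sqrt_0. lra. }
 specialize (Hg n). pose proof (Cmod_nonneg xi). pose proof (Cmod_nonneg (z n)). pose proof (Cmod_nonneg (z (n + d)%nat)).
 pose proof (Hbb n). assert (0 <= lw d bb n) by (unfold lw; destruct (d <=? n)%nat; [apply Hbb| lra]).
 rewrite H2 in H1.
 destruct (Rle_dec (Cmod (z n)) (Cmod (z (n + d)%nat))) as [|Hn]; [assumption|]. exfalso. apply Rnot_le_lt in Hn.
 assert (Cmod xi * bb n * Cmod (z (n + d)%nat) <= Cmod xi * bb n * Cmod (z n)) by (apply Rmult_le_compat_l; [nra| lra]).
 assert (Cmod xi * (lw d bb n * Cmod (z n)) + 1 * Cmod (z n) + Cmod xi * bb n * Cmod (z n) <= g n * Cmod (z n)).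
 { replace (Cmod xi * (lw d bb n * Cmod (z n)) + 1 * Cmod (z n) + Cmod xi * bb n * Cmod (z n)) with
     ((Cmod xi * (bb n + lw d bb n) + 1) * Cmod (z n)) by ring. apply Rmult_le_compat_r; lra. }
 assert (Cmod xi * Cmod (lowt d bb z n) <= Cmod xi * (lw d bb n * Cmod (z n))) by (apply Rmult_le_compat_l; lra).
 lra.
Qed.

Lemma kernel d bb xi g z : (1 <= d)%nat -> (forall n, 0 <= bb n) ->
  (forall n, Cmod xi * (bb n + lw d bb n) + 1 <= g n) -> l2 z ->
  (forall n, Bop d bb xi g z n = RtoC 0) -> forall n, z n = RtoC 0.
Proof.
 intros Hd Hbb Hg L E.
 assert (Mono: forall n, Cmod (z n) <= Cmod (z (n + d)%nat)).
 { intros n. induction n as [n IH] using lt_wf_ind. apply (kernel_step d bb xi g); auto.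
   intros Hn. specialize (IH (n - d)%nat ltac:(lia)). replace (n - d + d)%nat with n in IH by lia. exact IH. }
 assert (Ch: forall n j, Cmod (z n) <= Cmod (z (n + j * d)%nat)).
 { intros n j. induction j; [rewrite Nat.add_0_r; lra|].
   eapply Rle_trans; [exact IHj|]. replace (n + S j * d)%nat with (n + j * d + d)%nat by lia. apply Mono. }
 intros n. apply Cmod_eq_0.
 pose proof (Cmod_nonneg (z n)).
 destruct (Rle_lt_or_eq_dec 0 (Cmod (z n)) H) as [Hp|]; [exfalso|auto].
 pose proof (ex_series_lim_0 _ L) as Hl. apply is_lim_seq_spec in Hl.
 assert (He: 0 < Cmod (z n) ^ 2) by (apply pow_lt; exact Hp).
 destruct (Hl (mkposreal _ He)) as [M HM]. specialize (HM (n + M * d)%nat ltac:(nia)). simpl in HM.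
 specialize (Ch n M). rewrite Rminus_0_r, Rabs_pos_eq in HM by apply pow2_ge_0.
 assert (Cmod (z n) ^ 2 <= Cmod (z (n + M * d)%nat) ^ 2) by (apply pow_incr; lra).
 simpl in *. lra.
Qed.

Lemma quad_zero P Y : 0 <= Y -> (forall t, 0 <= - 2 * t * P + t ^ 2 * Y) -> P = 0.
Proof. intros HY H. set (t := P / (Y + 1)). assert (Ht: P = t * (Y + 1)) by (unfold t; field; lra).
 specialize (H t). rewrite Ht in H. assert (t = 0) by nra. rewrite Ht, H0. ring. Qed.

Lemma lim_inv_S : is_lim_seq (fun j => / (INR j + 1)) 0.
Proof. apply is_lim_seq_spec. intros [eps He]. destruct (archimed_cor1 eps He) as [N [HN HN0]].
 exists N. intros j Hj. simpl. rewrite Rminus_0_r.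
 assert (0 < INR N) by (apply lt_0_INR; lia). assert (INR N <= INR j) by (apply le_INR; lia).
 rewrite Rabs_pos_eq by (apply Rlt_le, Rinv_0_lt_compat; lra).
 apply Rle_lt_trans with (/ INR N); [apply Rinv_le_contravar; lra| exact HN]. Qed.

Lemma Cmod_sq_conv z w : clim z w -> is_lim_seq (fun i => Cmod (z i) ^ 2) (Cmod w ^ 2).
Proof. intros H. pose proof (lim_sqdiff z w (RtoC 0) H) as H1.
 replace (Cmod w ^ 2) with (Cmod (Cminus (RtoC 0) w) ^ 2) by (rewrite !Cmod_sq; destruct w; simpl; ring).
 eapply is_lim_seq_ext; [|exact H1].
 intros i. rewrite !Cmod_sq. destruct (z i); simpl; ring. Qed.

Lemma D0_l2 x : D0 x -> l2 x.
Proof. intros [M S]. apply (l2_supp x M S). Qed.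

Lemma D0_lin a b x y : D0 x -> D0 y -> D0 (fun m => Cplus (Cmult a (x m)) (Cmult b (y m))).
Proof. intros [M1 S1] [M2 S2]. exists (Nat.max M1 M2). apply supp_lin; eapply supp_mono; try eassumption; lia. Qed.

Lemma D0_minus x y : D0 x -> D0 y -> D0 (fun m => Cminus (x m) (y m)).
Proof. intros [M1 S1] [M2 S2]. exists (Nat.max M1 M2). apply supp_minus; eapply supp_mono; try eassumption; lia. Qed.

Lemma D0_Bop d bb xi g x : D0 x -> D0 (Bop d bb xi g x).
Proof. intros [M S]. exists (M + d)%nat. exact (Bop_supp d bb xi g x M S). Qed.

Ltac CsolveF := intros; repeat match goal with z : C |- _ => destruct z end;
  unfold Cminus, Cplus, Cmult, Cconj, Copp, RtoC, Re, Im in *; simpl in *; f_equal; field.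

Lemma nrm2_ext_sq x y : (forall n, Cmod (x n) ^ 2 = Cmod (y n) ^ 2) -> nrm2 x = nrm2 y.
Proof. intros H. unfold nrm2. apply Series_ext. exact H. Qed.

Lemma density d bb xi g h : (1 <= d)%nat -> (forall n, 0 <= bb n) ->
  (forall n, Cmod xi * (bb n + lw d bb n) + 1 <= g n) -> l2 h ->
  exists xs : nat -> vec, (forall j, D0 (xs j)) /\
    is_lim_seq (fun j => nrm2 (fun n => Cminus (Bop d bb xi g (xs j) n) (h n))) 0.
Proof.
 intros Hd Hbb Hg Lh.
 set (T := Bop d bb xi g).
 set (Nf := fun x => nrm2 (fun n => Cminus (h n) (T x n))).
 assert (LN: forall x, D0 x -> l2 (fun n => Cminus (h n) (T x n))).
 { intros x Dx. apply l2_minus; [exact Lh| apply D0_l2, D0_Bop, Dx]. }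
 set (E := fun y => exists x, D0 x /\ y = - Nf x).
 assert (Hb: bound E). { exists 0. intros y [x [Dx ->]]. pose proof (nrm2_nonneg _ (LN x Dx)). unfold Nf. lra. }
 assert (Hne: exists y, E y). { exists (- Nf (fun _ => RtoC 0)). exists (fun _ => RtoC 0). split; [|reflexivity].
   exists O. intros; reflexivity. }
 destruct (completeness E Hb Hne) as [m [Hub Hlub]].
 set (del := - m).
 assert (Hlow: forall x, D0 x -> del <= Nf x).
 { intros x Dx. assert (E (- Nf x)) by (exists x; split; auto). specialize (Hub _ H). unfold del. lra. }
 assert (Happ: forall eps, 0 < eps -> exists x, D0 x /\ Nf x < del + eps).
 { intros eps He. apply NNPP. intros Hn.
   assert (is_upper_bound E (m - eps)).
   { intros y [x [Dx ->]]. destruct (Rlt_dec (Nf x) (del + eps)) as [Hl|Hl].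
     - exfalso; apply Hn; exists x; split; auto.
     - unfold del in Hl. lra. }
   specialize (Hlub _ H). lra. }
 destruct (functional_choice (fun (j : nat) x => D0 x /\ Nf x < del + / (INR j + 1))) as [xs Hxs].
 { intros j. apply Happ. apply Rinv_0_lt_compat. pose proof (pos_INR j). lra. }
 set (a := fun j n => Cminus (h n) (T (xs j) n)).
 assert (La: forall j, l2 (a j)) by (intros j; apply LN, Hxs).
 assert (Cau: forall i j, nrm2 (fun n => Cminus (a i n) (a j n)) <= 2 * / (INR i + 1) + 2 * / (INR j + 1)).
 { intros i j.
   pose proof (parallelogram (a i) (a j) (La i) (La j)) as Hp.
   set (mid := fun n => Cplus (Cmult (RtoC (/ 2)) (xs i n)) (Cmult (RtoC (/ 2)) (xs j n))).
   assert (Dm: D0 mid) by (apply D0_lin; apply Hxs).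
   assert (Hm: nrm2 (fun n => Cplus (a i n) (a j n)) = 4 * Nf mid).
   { unfold Nf. rewrite <- (nrm2_ext (fun n => Cmult (RtoC 2) (Cminus (h n) (T mid n)))).
     - rewrite nrm2_scal by (apply LN, Dm). unfold Cmod, RtoC; simpl.
       replace (2 * (2 * 1) + 0 * (0 * 1)) with (2 * 2) by ring. rewrite sqrt_square by lra. ring.
     - intros n. unfold a, mid, T. rewrite Bop_lin. generalize (h n) (Bop d bb xi g (xs i) n) (Bop d bb xi g (xs j) n). CsolveF. }
   pose proof (Hlow mid Dm). destruct (Hxs i) as [_ Hi]. destruct (Hxs j) as [_ Hj].
   unfold Nf in Hi, Hj. fold (a i) in Hi. fold (a j) in Hj.
   assert (Hai: nrm2 (a i) < del + / (INR i + 1)) by exact Hi.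
   assert (Haj: nrm2 (a j) < del + / (INR j + 1)) by exact Hj.
   lra. }
 destruct (l2_complete a La) as [r [Lr [Ld Hlim]]].
 { intros eps He. destruct (archimed_cor1 (eps / 4)) as [J [HJ HJ0]]; [lra|].
   exists J. intros i j Hi Hj. eapply Rle_lt_trans; [apply Cau|].
   assert (0 < INR J) by (apply lt_0_INR; lia).
   assert (/ (INR i + 1) <= / INR J) by (apply Rinv_le_contravar; [lra| apply Rle_trans with (INR J + 0); [lra| apply Rplus_le_compat; [apply le_INR; lia| lra]]]).
   assert (/ (INR j + 1) <= / INR J) by (apply Rinv_le_contravar; [lra| apply Rle_trans with (INR J + 0); [lra| apply Rplus_le_compat; [apply le_INR; lia| lra]]]).
   lra. }
 assert (Hpt: forall n, clim (fun j => a j n) (r n)) by (apply l2conv_pointwise; auto).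
 assert (Orth: forall n0, T r n0 = RtoC 0).
 { intros n0.
   set (y := T (delta n0)). set (K := (S n0 + d)%nat).
   assert (Sy: supp y K) by (apply Bop_supp, supp_delta).
   assert (HF: forall c : C, 0 <= fsum (fun n => Cmod (Cminus (r n) (Cmult c (y n))) ^ 2 - Cmod (r n) ^ 2) K).
   { intros c.
     assert (Sc: supp (fun n => Cmult c (y n)) K) by (intros n Hn; rewrite Sy by exact Hn; generalize c; Csolve).
     assert (Hj: forall j, - / (INR j + 1) <= fsum (fun n => Cmod (Cminus (a j n) (Cmult c (y n))) ^ 2 - Cmod (a j n) ^ 2) K).
     { intros j. set (x' := fun n => Cplus (Cmult (RtoC 1) (xs j n)) (Cmult c (delta n0 n))).
       assert (Dx': D0 x') by (apply D0_lin; [apply Hxs| exists (S n0); apply supp_delta]).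
       pose proof (Hlow x' Dx') as H1.
       assert (Nf x' = nrm2 (fun n => Cminus (a j n) (Cmult c (y n)))).
       { unfold Nf. apply nrm2_ext. intros n. unfold x', a, y, T. rewrite Bop_lin.
         generalize (h n) (Bop d bb xi g (xs j) n) (Bop d bb xi g (delta n0) n) c. Csolve. }
       rewrite H, (nrm2_perturb _ _ K (La j) Sc) in H1.
       destruct (Hxs j) as [_ H2]. unfold Nf in H2. fold (a j) in H2. lra. }
     assert (Hl: is_lim_seq (fun j => fsum (fun n => Cmod (Cminus (a j n) (Cmult c (y n))) ^ 2 - Cmod (a j n) ^ 2) K)
                   (fsum (fun n => Cmod (Cminus (r n) (Cmult c (y n))) ^ 2 - Cmod (r n) ^ 2) K)).
     { apply (fsum_lim (fun j n => Cmod (Cminus (a j n) (Cmult c (y n))) ^ 2 - Cmod (a j n) ^ 2)).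
       intros n. apply is_lim_seq_minus'; apply Cmod_sq_conv; [apply clim_minus; [apply Hpt| apply clim_const]| apply Hpt]. }
     assert (Hz: is_lim_seq (fun j => - / (INR j + 1)) 0).
     { replace (Finite 0) with (Finite (- 0)) by (f_equal; ring). apply lim_opp, lim_inv_S. }
     pose proof (is_lim_seq_le _ _ _ _ Hj Hz Hl). exact H. }
   set (Y := fsum (fun n => fst (y n) ^ 2 + snd (y n) ^ 2) K).
   assert (HY: 0 <= Y) by (apply fsum_nonneg; intros; nra).
   assert (P1: fsum (fun n => fst (r n) * fst (y n) + snd (r n) * snd (y n)) K = 0).
   { apply (quad_zero _ Y HY). intros t. specialize (HF (RtoC t)).
     rewrite (fsum_ext _ (fun n => (-2 * t) * (fst (r n) * fst (y n) + snd (r n) * snd (y n)) + t ^ 2 * (fst (y n) ^ 2 + snd (y n) ^ 2))) in HF.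
     - rewrite fsum_plus, !fsum_scal in HF. unfold Y. lra.
     - intros n _. rewrite !Cmod_sq. destruct (r n), (y n); simpl; ring. }
   assert (P2: fsum (fun n => snd (r n) * fst (y n) - fst (r n) * snd (y n)) K = 0).
   { apply (quad_zero _ Y HY). intros t. specialize (HF (0, t)).
     rewrite (fsum_ext _ (fun n => (-2 * t) * (snd (r n) * fst (y n) - fst (r n) * snd (y n)) + t ^ 2 * (fst (y n) ^ 2 + snd (y n) ^ 2))) in HF.
     - rewrite fsum_plus, !fsum_scal in HF. unfold Y. lra.
     - intros n _. rewrite !Cmod_sq. destruct (r n), (y n); simpl; ring. }
   assert (Hcs: csum (fun m => Cmult (Cconj (r m)) (y m)) K = RtoC 0).
   { apply injective_projections.
     - rewrite csum_fst. change (fst (RtoC 0)) with 0.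
       transitivity (fsum (fun n => fst (r n) * fst (y n) + snd (r n) * snd (y n)) K); [|exact P1].
       apply fsum_ext. intros n _.
       generalize (r n) (y n). intros [? ?] [? ?]. simpl. ring.
     - rewrite csum_snd. change (snd (RtoC 0)) with 0.
       transitivity (-1 * fsum (fun n => snd (r n) * fst (y n) - fst (r n) * snd (y n)) K); [|rewrite P2; ring].
       rewrite <- fsum_scal. apply fsum_ext. intros n _.
       generalize (r n) (y n). intros [? ?] [? ?]. simpl. ring. }
   unfold y, T in Hcs. rewrite (hermitian d bb xi g r (delta n0) (S n0) K (supp_delta n0) (le_n _)) in Hcs.
   rewrite csum_delta in Hcs by (unfold K; lia).
   change (Bop d bb xi g r n0 = RtoC 0). revert Hcs. generalize (Bop d bb xi g r n0). intros [z1 z2] Hz. unfold Cconj, RtoC in *. simpl in *.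
   injection Hz; intros; f_equal; lra. }
 assert (R0: forall n, r n = RtoC 0) by (apply (kernel d bb xi g); auto).
 exists xs. split; [intros j; apply Hxs|].
 eapply is_lim_seq_ext; [|exact Hlim]. intros j. apply nrm2_ext_sq. intros n. unfold a. rewrite R0.
 rewrite !Cmod_sq. fold T. destruct (h n), (T (xs j) n); simpl; ring.
Qed.

Definition GB d bb xi f : graph := fun u w => D0 u /\ w = Bop d bb xi f u.

Lemma inner_fin u y K : supp y K -> inner u y = csum (fun n => Cmult (Cconj (u n)) (y n)) K.
Proof. intros S. unfold inner. apply injective_projections; simpl.
 - rewrite csum_fst. apply Series_fin. intros n Hn. rewrite S by exact Hn. unfold Re. generalize (u n). intros [? ?]; simpl; ring.
 - rewrite csum_snd. apply Series_fin. intros n Hn. rewrite S by exact Hn. unfold Im. generalize (u n). intros [? ?]; simpl; ring.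
Qed.

Lemma nrm2_zero : nrm2 (fun _ => RtoC 0) = 0.
Proof. rewrite (nrm2_supp (fun _ => RtoC 0) 0) by (intros n _; reflexivity). reflexivity. Qed.

Lemma conv_self x : is_lim_seq (fun j : nat => nrm2 (fun n => Cminus (x n) (x n))) 0.
Proof. eapply is_lim_seq_ext; [|apply is_lim_seq_const]. intros j. simpl. rewrite <- nrm2_zero.
 apply nrm2_ext. intros n. generalize (x n). Csolve. Qed.

Lemma closure_D0 d bb xi f x : D0 x -> closure (GB d bb xi f) x (Bop d bb xi f x).
Proof. intros Dx. split; [apply D0_l2, Dx|]. split; [apply D0_l2, D0_Bop, Dx|].
 exists (fun _ => x), (fun _ => Bop d bb xi f x). split; [intros j; split; auto|].
 split; apply conv_self. Qed.

Lemma Cconj_inj a b : Cconj a = Cconj b -> a = b.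
Proof. destruct a, b; unfold Cconj; simpl; intros H; injection H; intros; f_equal; lra. Qed.

Lemma adj_formal d bb xi f v w : adjoint (closure (GB d bb xi f)) v w -> forall n, w n = Bop d bb xi f v n.
Proof.
 intros [Lv [Lw H]] n0. set (K := (S n0 + d)%nat).
 specialize (H _ _ (closure_D0 d bb xi f (delta n0) (ex_intro _ (S n0) (supp_delta n0)))).
 rewrite (inner_fin v _ K (Bop_supp _ _ _ _ _ _ (supp_delta n0))) in H.
 rewrite (inner_fin w _ K (supp_mono (delta n0) (S n0) K ltac:(unfold K; lia) (supp_delta n0))) in H.
 rewrite (hermitian d bb xi f v (delta n0) (S n0) K (supp_delta n0) (le_n _)) in H.
 rewrite !csum_delta in H by (unfold K; lia).
 symmetry. apply Cconj_inj, H.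
Qed.

Lemma closure_adjoint d bb xi f v w : closure (GB d bb xi f) v w -> adjoint (closure (GB d bb xi f)) v w.
Proof.
 intros [Lv [Lw [vs [ws [Hg [Cv Cw]]]]]].
 assert (Lvs: forall j, l2 (vs j)) by (intros j; apply D0_l2, (Hg j)).
 assert (Lws: forall j, l2 (ws j)) by (intros j; destruct (Hg j) as [D E]; rewrite E; apply D0_l2, D0_Bop, D).
 assert (Pv: forall n, clim (fun j => vs j n) (v n)) by (apply l2conv_pointwise; auto; intros; apply l2_minus; auto).
 assert (Pw: forall n, clim (fun j => ws j n) (w n)) by (apply l2conv_pointwise; auto; intros; apply l2_minus; auto).
 assert (StepA: forall x', D0 x' -> inner v (Bop d bb xi f x') = inner w x').
 { intros x' [M S]. set (K := (M + d)%nat).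
   rewrite (inner_fin v _ K (Bop_supp _ _ _ _ _ _ S)).
   rewrite (inner_fin w _ K (supp_mono x' M K ltac:(unfold K; lia) S)).
   apply (clim_unique (fun j => csum (fun m => Cmult (Cconj (vs j m)) (Bop d bb xi f x' m)) K)).
   - apply csum_lim. intros m. apply clim_mult_r, clim_conj, Pv.
   - eapply clim_ext; [|apply csum_lim; intros m; apply clim_mult_r, clim_conj, Pw].
     intros j. simpl. rewrite (hermitian d bb xi f (vs j) x' M K S (le_n _)).
     destruct (Hg j) as [_ E]. rewrite E. reflexivity. }
 split; [exact Lv|]. split; [exact Lw|].
 intros x y [Lx [Ly [xs [ys [Hg' [Cx Cy]]]]]].
 apply (clim_unique (fun i => inner v (ys i))).
 - apply inner_cont; auto. intros i; destruct (Hg' i) as [D E]; rewrite E; apply D0_l2, D0_Bop, D.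
 - eapply clim_ext; [|apply (inner_cont w xs x); auto; intros i; apply D0_l2, (Hg' i)].
   intros i. simpl. destruct (Hg' i) as [D E]. rewrite E. symmetry. apply StepA, D.
Qed.

Lemma Cmod_RtoC_sq c : Cmod (RtoC c) ^ 2 = c ^ 2.
Proof. rewrite Cmod_sq. simpl. ring. Qed.

Lemma adjoint_closure d bb xi f c0 v w : (1 <= d)%nat -> (forall n, 0 <= bb n) ->
  (forall n, Cmod xi * (bb n + lw d bb n) + 1 <= f n + c0) ->
  adjoint (closure (GB d bb xi f)) v w -> closure (GB d bb xi f) v w.
Proof.
 intros Hd Hbb Hco Had.
 pose proof (adj_formal _ _ _ _ _ _ Had) as Fw.
 destruct Had as [Lv [Lw _]].
 set (g := fun n => f n + c0).
 set (T := Bop d bb xi g).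
 set (h := fun n => Cplus (w n) (Cmult (RtoC c0) (v n))).
 assert (Lh: l2 h) by (apply l2_plus; [exact Lw| apply l2_scal, Lv]).
 assert (Tv: forall n, T v n = h n) by (intros n; unfold T, g, h; rewrite Bop_g, Fw; reflexivity).
 assert (TB: forall x n, T x n = Cplus (Bop d bb xi f x n) (Cmult (RtoC c0) (x n))) by (intros; unfold T, g; apply Bop_g).
 destruct (density d bb xi g h Hd Hbb Hco Lh) as [xs [Dxs Hx]].
 fold T in Hx.
 set (e := fun j => nrm2 (fun n => Cminus (T (xs j) n) (h n))).
 assert (Le: forall j, l2 (fun n => Cminus (T (xs j) n) (h n))) by (intros; apply l2_minus; [apply D0_l2, D0_Bop, Dxs| exact Lh]).
 assert (Lxs: forall j, l2 (xs j)) by (intros; apply D0_l2, Dxs).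
 assert (Cau: forall i j, nrm2 (fun n => Cminus (xs i n) (xs j n)) <= 2 * e i + 2 * e j).
 { intros i j. destruct (D0_minus _ _ (Dxs i) (Dxs j)) as [M S].
   eapply Rle_trans; [apply (coerc_D0 d bb xi g _ M Hbb Hco S)|].
   rewrite (nrm2_ext _ (fun n => Cminus (Cminus (T (xs i) n) (h n)) (Cminus (T (xs j) n) (h n)))).
   - apply nrm2_minus_le; apply Le.
   - intros n. fold T. unfold T. rewrite Bop_minus. fold T. generalize (T (xs i) n) (T (xs j) n) (h n). Csolve. }
 destruct (l2_complete xs Lxs) as [u [Lu [Ldu Hu]]].
 { intros eps He. apply is_lim_seq_spec in Hx. destruct (Hx (mkposreal (eps / 4) ltac:(lra))) as [J HJ].
   exists J. intros i j Hi Hj. pose proof (HJ i Hi) as H1. pose proof (HJ j Hj) as H2. simpl in H1, H2.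
   rewrite Rminus_0_r in H1, H2. apply Rabs_lt_between in H1. apply Rabs_lt_between in H2.
   pose proof (Cau i j). unfold e in H. lra. }
 assert (Pu: forall n, clim (fun j => xs j n) (u n)) by (apply l2conv_pointwise; auto).
 assert (Ph: forall n, clim (fun j => T (xs j) n) (h n)) by (apply l2conv_pointwise; auto).
 assert (TU: forall n, T u n = h n).
 { intros n. apply (clim_unique (fun j => T (xs j) n)); [apply Bop_clim, Pu| apply Ph]. }
 assert (UV: forall n, u n = v n).
 { assert (K0: forall n, Cminus (u n) (v n) = RtoC 0).
   { apply (kernel d bb xi g); auto; [apply l2_minus; auto|].
     intros n. rewrite Bop_minus. fold T. rewrite TU, Tv. generalize (h n). Csolve. }
   intros n. specialize (K0 n). revert K0. generalize (u n) (v n). intros [? ?] [? ?] H.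
   unfold Cminus, Cplus, Copp, RtoC in H; simpl in H. injection H; intros; f_equal; lra. }
 assert (Cx: is_lim_seq (fun j => nrm2 (fun n => Cminus (xs j n) (v n))) 0).
 { eapply is_lim_seq_ext; [|exact Hu]. intros j; apply nrm2_ext; intros n; rewrite UV; reflexivity. }
 split; [exact Lv|]. split; [exact Lw|].
 exists xs, (fun j => Bop d bb xi f (xs j)). split; [intros j; split; [apply Dxs| reflexivity]|].
 split; [exact Cx|].
 apply is_lim_seq_le_le with (fun _ => 0) (fun j => 2 * e j + 2 * (c0 ^ 2 * nrm2 (fun n => Cminus (xs j n) (v n)))).
 - intros j. split.
   + apply nrm2_nonneg. apply l2_minus; [apply D0_l2, D0_Bop, Dxs| exact Lw].
   + rewrite (nrm2_ext _ (fun n => Cminus (Cminus (T (xs j) n) (h n)) (Cmult (RtoC c0) (Cminus (xs j n) (v n))))).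
     * rewrite <- Cmod_RtoC_sq, <- nrm2_scal by (apply l2_minus; auto).
       apply nrm2_minus_le; [apply Le| apply l2_scal, l2_minus; auto].
     * intros n. rewrite TB. unfold h. generalize (Bop d bb xi f (xs j) n) (xs j n) (v n) (w n). Csolve.
 - apply is_lim_seq_const.
 - replace (Finite 0) with (Finite (2 * 0 + 2 * (c0 ^ 2 * 0))) by (f_equal; ring).
   apply is_lim_seq_plus'; apply lim_scal_l; [exact Hx|]. apply lim_scal_l, Cx.
Qed.

Theorem esa_generic d bb xi f c0 : (1 <= d)%nat -> (forall n, 0 <= bb n) ->
  (forall n, Cmod xi * (bb n + lw d bb n) + 1 <= f n + c0) ->
  essentially_self_adjoint (GB d bb xi f).
Proof. intros Hd Hbb Hco v w. split; [apply closure_adjoint| apply (adjoint_closure d bb xi f c0); auto]. Qed.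

Theorem proposition3p5 (k l : nat) (xi : C) (f : nat -> R)
  (kappa : R) (N : nat) :
  (l < k)%nat ->
  (forall n, 0 <= f n) ->
  2 <= kappa ->
  (forall n : nat, (N <= n)%nat -> f n >= kappa * Cmod xi * beta k l (Z.of_nat n)) ->
  essentially_self_adjoint (graph_of_A k l xi f) /\
  (2 < kappa -> forall psi : vec, D0 psi ->
     Im (inner psi (A_op k l xi f psi)) = 0 /\
     Re (inner psi (A_op k l xi f psi)) >=
       - (2 * Cmod xi * beta k l (Z.of_nat N - 1) * kappa / (kappa - 2)) * nrm2 psi).
Proof.
 intros Hlk Hf Hk HN.
 set (d := (k - l)%nat). set (bb := fun n : nat => beta k l (Z.of_nat n)).
 assert (Hbb: forall n, 0 <= bb n) by (intros; apply beta_nonneg).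
 assert (Hlw: forall n, lw d bb n <= bb n).
 { intros n. unfold lw. destruct (Nat.leb_spec d n); [apply beta_mono; lia| apply Hbb]. }
 assert (Hlw0: forall n, 0 <= lw d bb n) by (intros n; unfold lw; destruct (d <=? n)%nat; [apply Hbb| lra]).
 set (c1 := 2 * Cmod xi * beta k l (Z.of_nat N - 1)).
 pose proof (Cmod_nonneg xi) as Hxi.
 assert (Hc1: 0 <= c1) by (unfold c1; pose proof (beta_nonneg k l (Z.of_nat N - 1)); nra).
 assert (Hrow: forall n, Cmod xi * (bb n + lw d bb n) <= f n + c1).
 { intros n. pose proof (Hlw n). pose proof (Hbb n). pose proof (Hlw0 n). destruct (Nat.leb_spec N n).
   - specialize (HN n H2). fold (bb n) in HN.
     assert (Cmod xi * bb n * 2 <= Cmod xi * bb n * kappa) by (apply Rmult_le_compat_l; nra).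
     nra.
   - assert (bb n <= beta k l (Z.of_nat N - 1)) by (apply beta_mono; lia).
     specialize (Hf n). unfold c1. nra. }
 assert (EA: forall u, A_op k l xi f u = Bop d bb xi f u) by (intros; apply A_op_eq, Hlk).
 split.
 - assert (EG: graph_of_A k l xi f = GB d bb xi f).
   { unfold graph_of_A, GB. apply functional_extensionality; intro u; apply functional_extensionality; intro w.
     rewrite EA. reflexivity. }
   rewrite EG. apply (esa_generic d bb xi f (c1 + 1)); [unfold d; lia| exact Hbb|].
   intros n. specialize (Hrow n). lra.
 - intros Hk2 psi [M S]. rewrite EA.
   set (K := (M + d)%nat).
   rewrite (inner_fin psi _ K (Bop_supp _ _ _ _ _ _ S)).
   destruct (qform d bb xi f psi M K S (le_n _) Hbb) as [Him Hre].
   unfold Im, Re. split; [exact Him|].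
   assert (SK: supp psi K) by (apply (supp_mono psi M K); [unfold K; lia| exact S]).
   rewrite (nrm2_supp _ _ SK).
   assert (H1: fsum (fun n => (- c1) * Cmod (psi n) ^ 2) K <= fsum (fun n => (f n - Cmod xi * (bb n + lw d bb n)) * Cmod (psi n) ^ 2) K).
   { apply fsum_le. intros n _. pose proof (Cmod2_nonneg (psi n)). specialize (Hrow n). nra. }
   rewrite fsum_scal in H1.
   assert (Hn: 0 <= fsum (fun n => Cmod (psi n) ^ 2) K) by (apply fsum_nonneg; intros; apply Cmod2_nonneg).
   assert (Hct: c1 <= c1 * kappa / (kappa - 2)).
   { assert (c1 * kappa / (kappa - 2) - c1 = 2 * c1 / (kappa - 2)) by (field; lra).
     assert (0 <= 2 * c1 / (kappa - 2)) by (apply Rdiv_le_0_compat; lra). lra. }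
   apply Rle_ge. apply Rle_trans with (- c1 * fsum (fun n => Cmod (psi n) ^ 2) K); [|lra].
   apply Rmult_le_compat_r; lra.
Qed.
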